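(* Consider an instance of the uncapacitated food delivery problem with $k\ge1$ vehicles on a tree $T=(V,E)$ rooted at the depot $o$, let $F>0$ be at least the optimum offline maximum flow time, and fix an offline optimum solution. Let $R'\subseteq R$, and let $\mathcal{P}$ be the set of trips in the optimum solution that serve at least one request in $R'$. Then every edge $e\in E$ is used by at least $c_F(R',e)$ trips in $\mathcal{P}$; consequently the total length of the trips in $\mathcal{P}$ is at least $\mathrm{cost}_F(R')$.
   Context: FDP: a graph (here a tree) with lengths $\ell:E\to\mathbb{R}_{>0}$, depot $o$, $k$ unit-speed vehicles at $o$, capacity $c$ (here $c=\infty$), requests $\rho=(r_\rho,v_\rho)$ with arrival time $r_\rho\ge0$ and delivery location $v_\rho\in V$. A trip is a closed walk from $o$ to $o$ not visiting $o$ in between, started at some time $t$, serving a set of requests with $r_\rho\le t$ whose locations it visits; a request is served when the walk first reaches its location. Each vehicle performs trips sequentially; every request is served exactly once; flow time of $\rho$ = service time $-\,r_\rho$; objective: minimize maximum flow time. Tree notation: $V_v$ is the set of descendants of $v$ (including $v$); for an edge $e=(u,v)$ with $v$ the child, $V_e=V_v$. For $X\subseteq V$, $\mathrm{mst}(X)$ is the total length of the minimal subtree of $T$ containing $X\cup\{o\}$, and $\mathrm{mst}_e(X)=\mathrm{mst}(V_e\cap X)$; a set of requests is identified with the set of its delivery locations. $c_F(X,e)=\lceil \mathrm{mst}_e(X)/F\rceil$ and $\mathrm{cost}_F(X)=2\sum_{e\in E}c_F(X,e)\ell(e)$. *)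

(* Defs.v *)
From HB Require Import structures.
From mathcomp Require Import all_boot all_order all_algebra.
From mathcomp Require Import reals.
Set Implicit Arguments. Unset Strict Implicit. Unset Printing Implicit Defensive.
Import Order.TTheory GRing.Theory Num.Theory.
Local Open Scope ring_scope.

Section FDP.
Variables (R : realType) (V : finType) (o : V) (par : V -> V) (len : V -> R).
(* Rooted tree: every v <> o has the edge (par v, v) of length [len v];
   an edge is identified with its child endpoint v (v != o). *)

Definition is_rooted_tree : Prop :=
  par o = o /\ forall v : V, exists n : nat, iter n par v = o.

Definition pos_lengths : Prop := forall v : V, v != o -> 0 < len v.

Definition up_rel : rel V := fun x y => (x != o) && (par x == y).

(* u \in V_v : u is a descendant of v (including v itself) *)
Definition desc (u v : V) : bool := connect up_rel u v.

Definition adj : rel V := fun u w => up_rel u w || up_rel w u.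

Definition steplen (u w : V) : R :=
  if up_rel u w then len u else if up_rel w u then len w else 0.

(* A trip is given by p : seq V, the closed walk being o :: p. *)
Definition walk (p : seq V) : seq V := o :: p.

Definition valid_trip (p : seq V) : bool :=
  [&& path adj o p, last o p == o & all (fun v => v != o) (behead (belast o p))].

Definition time_to (p : seq V) (n : nat) : R :=
  \sum_(i < n) steplen (nth o (walk p) i) (nth o (walk p) i.+1).

Definition trip_len (p : seq V) : R := time_to p (size p).

Definition arrive (p : seq V) (v : V) : R := time_to p (index v (walk p)).

Definition uses_edge (p : seq V) (e : V) : bool :=
  has (fun uw : V * V => ((uw.1 == e) && (uw.2 == par e)) ||
                         ((uw.2 == e) && (uw.1 == par e)))
      (zip (walk p) p).

Variables (Req : finType) (rel_t : Req -> R) (loc : Req -> V) (k : nat).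

(* A solution: for each vehicle, the sequence of its trips (start time, walk),
   plus for each request the trip (vehicle, index) serving it. *)
Record solution := Solution {
  sched : 'I_k -> seq (R * seq V);
  asg : Req -> 'I_k * nat }.

Definition trip_of (S : solution) (i : 'I_k) (j : nat) : R * seq V :=
  nth (0, [::]) (sched S i) j.

Definition feasible (S : solution) : Prop :=
  (forall i j, (j < size (sched S i))%N -> valid_trip (trip_of S i j).2) /\
  (forall i j, (j < size (sched S i))%N -> 0 <= (trip_of S i j).1) /\
  (forall i j, (j.+1 < size (sched S i))%N ->
     (trip_of S i j).1 + trip_len (trip_of S i j).2 <= (trip_of S i j.+1).1) /\
  (forall q : Req,
     let: (i, j) := asg S q in
     [/\ (j < size (sched S i))%N,
         loc q \in walk (trip_of S i j).2 &
         rel_t q <= (trip_of S i j).1]).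

Definition service_time (S : solution) (q : Req) : R :=
  let: (i, j) := asg S q in
  (trip_of S i j).1 + arrive (trip_of S i j).2 (loc q).

Definition flow_time (S : solution) (q : Req) : R := service_time S q - rel_t q.

Definition max_flow (S : solution) : R :=
  \big[Num.max/0]_(q : Req) flow_time S q.

Definition optimal (S : solution) : Prop :=
  feasible S /\ forall S' : solution, feasible S' -> max_flow S <= max_flow S'.

Definition serves_some (S : solution) (X : {set Req}) (i : 'I_k) (j : nat) : bool :=
  [exists q in X, asg S q == (i, j)].

(* mst(Y): total length of the minimal subtree containing Y \cup {o} *)
Definition mst (Y : {set V}) : R :=
  \sum_(w : V | (w != o) && [exists u in Y, desc u w]) len w.

(* mst_e(X) = mst(V_e \cap X), requests identified with their locations *)
Definition mst_e (X : {set Req}) (e : V) : R :=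
  mst [set u | (u \in [set loc q | q in X]) && desc u e].

Definition cF (F : R) (X : {set Req}) (e : V) : int := Num.ceil (mst_e X e / F).

Definition costF (F : R) (X : {set Req}) : R :=
  2 * \sum_(e : V | e != o) (cF F X e)%:~R * len e.

Definition n_trips_using (S : solution) (X : {set Req}) (e : V) : nat :=
  \sum_(i < k) count (fun j => serves_some S X i j && uses_edge (trip_of S i j).2 e)
                     (iota 0 (size (sched S i))).

Definition total_len (S : solution) (X : {set Req}) : R :=
  \sum_(i < k) \sum_(j <- iota 0 (size (sched S i)) | serves_some S X i j)
      trip_len (trip_of S i j).2.

End FDP.

(* Main.v *)
Require Import Defs.
From HB Require Import structures.
From mathcomp Require Import all_boot all_order all_algebra.
From mathcomp Require Import reals.
From mathcomp Require Import zify lra.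
Import Order.TTheory GRing.Theory Num.Theory.
Local Open Scope ring_scope.

Section Helpers.
Set Implicit Arguments. Unset Strict Implicit.
Variables (R : realType) (V : finType) (o : V) (par : V -> V) (len : V -> R).
Local Notation up := (up_rel o par).
Local Notation desc := (desc o par).
Local Notation adj := (adj o par).
Local Notation X p m := (nth o (walk o p) m).

Lemma desc_o w : desc o w -> w = o.
Proof.
case/connectP => -[|y q] /=; first by move=> _ ->.
by case/andP; rewrite /up_rel eqxx.
Qed.

Lemma desc_par u : u != o -> desc u (par u).
Proof. by move=> uo; apply: connect1; rewrite /up_rel uo eqxx. Qed.

Lemma desc_up u w : desc u w -> u != w -> desc (par u) w.
Proof.
case/connectP => -[|y q] /=; first by move=> _ ->; rewrite eqxx.
case/andP => /andP[uo /eqP <-] pq -> _.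
by apply/connectP; exists q.
Qed.

Definition ed (u w : V) := if up u w then u else w.

Lemma ed_adj u w : adj u w -> steplen o par len u w = len (ed u w) /\ ed u w != o.
Proof.
rewrite /adj /steplen /ed; case H: (up u w) => /=.
  by move=> _; split => //; case/andP: H.
by move=> H2; rewrite H2; split => //; case/andP: H2.
Qed.

Lemma cross u w e : adj u w -> desc u e != desc w e -> ed u w = e.
Proof.
rewrite /adj /ed; case H: (up u w) => /= Ha.
  case/andP: H => uo /eqP pw.
  case Du: (desc u e); case Dw: (desc w e) => //= _.
    case: (eqVneq u e) => // ne.
    by have := desc_up Du ne; rewrite pw Dw.
  have : desc u e by apply: connect_trans (desc_par uo) _; rewrite pw.
  by rewrite Du.
case/andP: Ha => wo /eqP pu.
case Du: (desc u e); case Dw: (desc w e) => //= _.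
  have : desc w e by apply: connect_trans (desc_par wo) _; rewrite pu.
  by rewrite Dw.
case: (eqVneq w e) => // ne.
by have := desc_up Dw ne; rewrite pu Du.
Qed.

Lemma change (f : nat -> bool) a b : (a <= b)%N -> f a != f b ->
  exists2 i, (a <= i < b)%N & f i != f i.+1.
Proof.
elim: b => [|b IH]; first by rewrite leqn0 => /eqP ->; rewrite eqxx.
rewrite leq_eqVlt => /orP[/eqP -> |]; first by rewrite eqxx.
rewrite ltnS => ab fab.
case: (eqVneq (f a) (f b)) => [e|ne].
  by exists b; [rewrite ab leqnn | rewrite -e].
have [i /andP[ai ib] fi] := IH ab ne.
by exists i => //; rewrite ai ltnS ltnW.
Qed.

Lemma adj_step p m : path adj o p -> (m < size p)%N -> adj (X p m) (X p m.+1).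
Proof. by move/pathP => H; apply: H. Qed.

Lemma reach p w m : path adj o p -> (m <= size p)%N -> w != o -> desc (X p m) w ->
  exists2 i, (i < m)%N & ed (X p i) (X p i.+1) = w.
Proof.
move=> pa ms wo dm.
have [|i /andP[_ im] ne] := change (f := fun i => desc (X p i) w) (leq0n m).
  rewrite dm /=; apply/negP => /eqP/desc_o we; by rewrite we eqxx in wo.
exists i => //; apply: cross ne; apply: adj_step => //; exact: leq_trans im ms.
Qed.

Lemma cover (I : finType) (T : eqType) (r : I -> seq T) (Q : I -> T -> bool)
  (P : pred V) (Pt : I -> T -> pred V) (f : V -> R) :
  (forall w, P w -> 0 <= f w) -> (forall i j w, Pt i j w -> 0 <= f w) ->
  (forall w, P w -> exists i, exists2 j, j \in r i & Q i j && Pt i j w) ->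
  \sum_(w | P w) f w <= \sum_i \sum_(j <- r i | Q i j) \sum_(w | Pt i j w) f w.
Proof.
move=> h1 h2 hc.
have nn : forall i' j' w, 0 <= (if Pt i' j' w then f w else 0).
  by move=> i' j' w; case E: (Pt i' j' w) => //; exact: h2 E.
apply: (@le_trans _ _ (\sum_(w | P w) \sum_i \sum_(j <- r i | Q i j)
                         (if Pt i j w then f w else 0))).
  apply: ler_sum => w Pw; have [i [j ji /andP[qj pt]]] := hc w Pw.
  rewrite (bigD1 i) //= (big_rem j ji) /= qj pt -addrA lerDl.
  apply: addr_ge0; first by apply: sumr_ge0 => *; exact: nn.
  by apply: sumr_ge0 => i' _; apply: sumr_ge0 => *; exact: nn.
apply: (@le_trans _ _ (\sum_w \sum_i \sum_(j <- r i | Q i j)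
                         (if Pt i j w then f w else 0))).
  rewrite [leRHS](bigID P) /= lerDl.
  by apply: sumr_ge0 => w _; apply: sumr_ge0 => i' _; apply: sumr_ge0 => *; exact: nn.
rewrite [leLHS]exchange_big; apply: ler_sum => i _.
rewrite [leLHS]exchange_big; apply: ler_sum => j _.
by rewrite [leRHS]big_mkcond.
Qed.

Lemma sum_const_seq (T : Type) (r : seq T) (a : pred T) (c : R) :
  \sum_(j <- r | a j) c = c *+ count a r.
Proof.
elim: r => [|x r IH]; first by rewrite big_nil.
by rewrite big_cons /= IH; case: (a x) => //=; rewrite mulrS.
Qed.

Lemma count_sum (T : Type) (r : seq T) (a b : pred T) :
  ((count (fun j => a j && b j) r)%:R : R) = \sum_(j <- r | a j) (b j)%:R.
Proof.
elim: r => [|x r IH]; first by rewrite big_nil.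
by rewrite big_cons /= natrD IH; case: (a x) => //=; rewrite add0r.
Qed.

Hypothesis hl : pos_lengths o len.

Lemma KL p n : path adj o p -> (n <= size p)%N ->
  \sum_(w | (w != o) && [exists m : 'I_n.+1, desc (X p m) w]) len w
    <= time_to o par len p n.
Proof.
move=> pa ns.
apply: le_trans (cover (I := 'I_n) (r := fun _ => [:: tt]) (Q := fun _ _ => true)
  (Pt := fun i _ w => w == ed (X p i) (X p i.+1)) (f := len) _ _ _) _.
- by move=> w /andP[wo _]; exact: ltW (hl wo).
- move=> i _ w /eqP ->.
  have [_ /hl/ltW //] := ed_adj (adj_step pa (leq_trans (ltn_ord i) ns)).
- move=> w /andP[wo /existsP[m dm]].
  have [|i im eq] := reach pa _ wo dm; first by have := ltn_ord m; lia.
  have iln : (i < n)%N by have := ltn_ord m; lia.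
  by exists (Ordinal iln); exists tt; rewrite ?mem_seq1 //= eq eqxx.
rewrite /time_to; apply: ler_sum => i _.
rewrite big_seq1 big_pred1_eq.
by have [-> _] := ed_adj (adj_step pa (leq_trans (ltn_ord i) ns)).
Qed.


Lemma uses_of_desc p u e : path adj o p -> e != o -> u \in walk o p -> desc u e ->
  uses_edge o par p e.
Proof.
move=> pa eo uw due.
have ml : (index u (walk o p) <= size p)%N by have := index_mem u (walk o p); rewrite uw /=.
have [|i im eq] := reach pa ml eo; first by rewrite nth_index.
have ilt : (i < size p)%N by apply: leq_trans im ml.
apply/(has_nthP (o, o)); exists i; first by rewrite size_zip /=; lia.
rewrite nth_zip_cond size_zip /= (_ : (i < minn (size p).+1 (size p))%N) /=; last by lia.
change (nth o p i) with (X p i.+1).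
move: (adj_step pa ilt) eq; rewrite /ed /adj.
case H: (up _ _) => /=; [move=> _ <- | move=> H2 <-].
  by case/andP: H => _ /eqP <-; rewrite !eqxx.
by case/andP: H2 => _ /eqP <-; rewrite !eqxx orbT.
Qed.

Lemma uses_in_walk p e : uses_edge o par p e -> e \in walk o p.
Proof.
case/(has_nthP (o, o)) => i; rewrite size_zip /= => ilt.
rewrite nth_zip_cond size_zip /= ilt /= => /orP[/andP[/eqP <- _]|/andP[/eqP <- _]].
  by apply: mem_nth => /=; exact: leq_trans ilt (geq_minl _ _).
have il : (i < size p)%N by exact: leq_trans ilt (geq_minr _ _).
by rewrite inE mem_nth ?orbT.
Qed.

Lemma two_cross p e : valid_trip o par p -> e != o -> e \in walk o p ->
  (1 < #|[pred i : 'I_(size p) | ed (X p i) (X p i.+1) == e]|)%N.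
Proof.
case/and3P => pa lo _ eo ew.
set m := index e (walk o p).
have xm : X p m = e by rewrite nth_index.
have ml : (m <= size p)%N by have := index_mem e (walk o p); rewrite ew /=.
have xl : X p (size p) = o.
  by have := nth_last o (o :: p); rewrite /= => ->; apply/eqP.
have m0 : (0 < m)%N.
  rewrite lt0n; apply/negP => /eqP m0; move: xm; rewrite m0 /= => eo'.
  by rewrite eo' eqxx in eo.
have mlt : (m < size p)%N.
  rewrite ltn_neqAle ml andbT; apply/negP => /eqP mE; move: xm; rewrite mE xl => eo'.
  by rewrite eo' eqxx in eo.
have [|i1 /andP[_ i1m] ne1] := change (f := fun i => desc (X p i) e) (leq0n m).
  rewrite xm /= (connect0 _ e : desc e e); apply/negP => /eqP/desc_o e'; by rewrite e' eqxx in eo.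
have [|i2 /andP[mi2 i2l] ne2] := change (f := fun i => desc (X p i) e) ml.
  rewrite xm xl /= (connect0 _ e : desc e e); apply/negP => /eqP/esym/desc_o e'; by rewrite e' eqxx in eo.
have i1l : (i1 < size p)%N by lia.
apply/card_gt1P; exists (Ordinal i1l), (Ordinal i2l); split.
- by rewrite inE /=; apply/eqP; apply: cross ne1; apply: adj_step.
- by rewrite inE /=; apply/eqP; apply: cross ne2; apply: adj_step.
- by rewrite -val_eqE /= neq_ltn; apply/orP; left; lia.
Qed.

Lemma trip_bound p : valid_trip o par p ->
  \sum_(e | e != o) 2 * ((uses_edge o par p e)%:R * len e) <= trip_len o par len p.
Proof.
move=> vp; have /and3P[pa lo _] := vp.
have -> : trip_len o par len p = \sum_(i < size p) len (ed (X p i) (X p i.+1)).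
  rewrite /trip_len /time_to; apply: eq_bigr => i _.
  by have [-> _] := ed_adj (adj_step pa (ltn_ord i)).
rewrite (partition_big (fun i : 'I_(size p) => ed (X p i) (X p i.+1)) predT) //.
have E : forall e, \sum_(i : 'I_(size p) | true && (ed (X p i) (X p i.+1) == e))
     len (ed (X p i) (X p i.+1)) =
   len e *+ #|[pred i : 'I_(size p) | ed (X p i) (X p i.+1) == e]|.
  move=> e; rewrite -sumr_const; apply: eq_big => [i|i /andP[_ /eqP ->]] //.
under eq_bigr => e _ do rewrite E.
rewrite [leRHS](bigID (fun e => e != o)) /=.
rewrite [Y in _ <= _ + Y]big1 ?addr0; last first.
  move=> e; rewrite negbK => /eqP ->.
  rewrite (@eq_card0 _ [pred i : 'I_(size p) | ed (X p i) (X p i.+1) == o]) ?mulr0n //.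
  move=> i; rewrite !inE /=.
  have [_ ] := ed_adj (adj_step pa (ltn_ord i)); by move/negbTE.
apply: ler_sum => e eo.
case U: (uses_edge o par p e) => /=.
  have c2 := two_cross vp eo (uses_in_walk U).
  apply: le_trans (_ : len e *+ 2 <= _).
    by rewrite mulr2n; lra.
  exact: (ler_wpMn2l (ltW (hl eo)) c2).
by rewrite mul0r mulr0; apply: mulrn_wge0; apply: ltW; apply: hl.
Qed.

End Helpers.

Theorem claim4p2 (R : realType) (V : finType) (o : V) (par : V -> V)
  (len : V -> R) (Req : finType) (rel_t : Req -> R) (loc : Req -> V) (k : nat)
  (F : R) (S : solution R V Req k) (R' : {set Req}) :
  is_rooted_tree o par -> pos_lengths o len -> (1 <= k)%N ->
  (forall q, 0 <= rel_t q) ->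
  optimal o par len rel_t loc S -> 0 < F ->
  max_flow o par len rel_t loc S <= F ->
  (forall e : V, e != o ->
     cF o par len loc F R' e <= (n_trips_using o par S R' e)%:Z) /\
  costF o par len loc F R' <= total_len o par len S R'.
Proof.
move=> tree hl k1 rel0 [[fv [fs [fseq fa]]] _] F0 mf.
have flowF : forall q, flow_time o par len rel_t loc S q <= F.
  by move=> q; apply: le_trans mf; exact: le_bigmax.
have validall : forall i j, valid_trip o par (trip_of S i j).2.
  move=> i j; case: (ltnP j (size (sched S i))) => jl; first exact: fv.
  by rewrite /trip_of nth_default // /valid_trip /= eqxx.
have P1 : forall e, e != o ->
    cF o par len loc F R' e <= (n_trips_using o par S R' e)%:Z.
  move=> e eo; rewrite /cF ceil_le_int ler_pdivrMr //.
  rewrite /mst_e /mst.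
  have tripF : forall i j, \sum_(w | (w != o) && [exists q in R', (asg S q == (i, j))
        && desc o par (loc q) e && desc o par (loc q) w]) len w <= F.
    move=> i j; set p := (trip_of S i j).2.
    case: (pickP (fun q => (q \in R') && (asg S q == (i, j)) && desc o par (loc q) e))
      => [q0 Hq0|none]; last first.
      rewrite big1 ?(ltW F0) // => w /andP[_ /existsP[q /andP[qR /andP[/andP[E de] _]]]].
      by have := none q; rewrite qR E de.
    case: (@arg_maxnP _ q0 (fun q => (q \in R') && (asg S q == (i, j)) && desc o par (loc q) e) (fun q => index (loc q) (walk o p)) Hq0)
      => qs /andP[/andP[qsR /eqP Eqs] dqs] maxq.
    have := fa qs; rewrite Eqs => -[jl lqs rqs].
    set n := index (loc qs) (walk o p).
    have nl : (n <= size p)%N by have := index_mem (loc qs) (walk o p); rewrite lqs.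
    apply: le_trans (_ : \sum_(w | (w != o) &&
        [exists m : 'I_n.+1, desc o par (nth o (walk o p) m) w]) len w <= _).
      rewrite [leLHS]big_mkcond [leRHS]big_mkcond; apply: ler_sum => w _.
      case: ifP => [/andP[wo /existsP[q /andP[qR /andP[/andP[E de] dw]]]]|_].
        have mq : (index (loc q) (walk o p) < n.+1)%N.
          by rewrite ltnS; apply: maxq; rewrite qR E de.
        rewrite wo /= (_ : [exists m : 'I_n.+1, _] = true) //.
        apply/existsP; exists (Ordinal mq) => /=.
        have := fa q; rewrite (eqP E) => -[_ lq _]; by rewrite nth_index.
      by case: ifP => // /andP[wo _]; exact: ltW (hl w wo).
    have /and3P[pa _ _] := validall i j.
    apply: le_trans (KL hl pa nl) _.
    have := flowF qs; rewrite /flow_time /service_time Eqs /arrive -/p -/n => h.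
    lra.
  apply: le_trans (cover (I := 'I_k) (r := fun i => iota 0 (size (sched S i)))
     (Q := fun i j => serves_some S R' i j && uses_edge o par (trip_of S i j).2 e)
     (Pt := fun i j w => (w != o) && [exists q in R', (asg S q == (i, j))
        && desc o par (loc q) e && desc o par (loc q) w])
     (f := len) _ _ _) _.
  - by move=> w /andP[wo _]; exact: ltW (hl w wo).
  - by move=> i j w /andP[wo _]; exact: ltW (hl w wo).
  - move=> w /andP[wo /existsP[u /andP[uY duw]]].
    move: uY duw; rewrite inE => /andP[/imsetP[q qR ->] due] duw.
    case E: (asg S q) => [i j].
    have := fa q; rewrite E => -[jl lq rq].
    exists i, j; first by rewrite mem_iota /= add0n.
    apply/andP; split; [apply/andP; split|].
    + by apply/existsP; exists q; rewrite qR E eqxx.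
    + have /and3P[pa _ _] := validall i j; exact: uses_of_desc pa eo lq due.
    + by rewrite wo /=; apply/existsP; exists q; rewrite qR E eqxx due duw.
  apply: le_trans (_ : \sum_(i < k) \sum_(j <- iota 0 (size (sched S i)) |
      serves_some S R' i j && uses_edge o par (trip_of S i j).2 e) F <= _).
    by apply: ler_sum => i _; apply: ler_sum => j _; exact: tripF.
  rewrite /n_trips_using -pmulrn natr_sum mulr_suml; apply: ler_sum => i _.
  by rewrite sum_const_seq mulr_natl.
split => //.
rewrite /costF /total_len.
apply: (@le_trans _ _ (2 * \sum_(e | e != o) (n_trips_using o par S R' e)%:R * len e)).
  apply: ler_wpM2l; first by lra.
  apply: ler_sum => e eo; apply: ler_wpM2r; first exact: ltW (hl e eo).
  by have := P1 e eo; rewrite -(ler_int R) -pmulrn.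
rewrite mulr_sumr.
apply: le_trans (_ : \sum_(e | e != o) \sum_(i < k) \sum_(j <- iota 0 (size (sched S i)) |
   serves_some S R' i j) 2 * ((uses_edge o par (trip_of S i j).2 e)%:R * len e) <= _).
  apply: ler_sum => e _; rewrite /n_trips_using natr_sum mulr_suml mulr_sumr.
  apply: ler_sum => i _.
  rewrite (@count_sum R _ _ (serves_some S R' i) (fun j => uses_edge o par (trip_of S i j).2 e)).
  by rewrite mulr_suml mulr_sumr.
rewrite [leLHS]exchange_big; apply: ler_sum => i _.
rewrite [leLHS]exchange_big; apply: ler_sum => j _.
have := trip_bound hl (validall i j). exact.
Qed.
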